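(* Let $H=kQ_H$ be a representation-finite hereditary (path) algebra over an algebraically closed field $k$, and let $f\colon X\to Y$ be a non-zero morphism between projective $H$-modules. Then there exist a sink $i$ and a source $j$ of $Q_H$ and morphisms $\alpha\colon P_i\to X$, $\beta\colon Y\to P_j$ such that $\beta f\alpha$ is a non-zero monomorphism.
   Context: $P_a$ denotes the indecomposable projective right $H$-module corresponding to the vertex $a$ of $Q_H$. A sink is a vertex with no outgoing arrows; a source is a vertex with no incoming arrows. *)

(* Defs.v *)
(* Finite-dimensional right modules over the path algebra kQ
   are modelled as finite-dimensional representations of the quiver Q
   (convention of Assem-Simson-Skowronski: P_a has basis the paths starting
   at a, so P_a is simple iff a is a sink). *)
From HB Require Import structures.
From mathcomp Require Import all_boot all_order all_algebra.
Set Implicit Arguments.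
Unset Strict Implicit.
Unset Printing Implicit Defensive.
Import GRing.Theory.
Local Open Scope ring_scope.

Section Quiver.
Variables (k : fieldType) (V E : finType) (src tgt : E -> V).

(* a finite-dimensional representation: a vector space k^(rdim a) at each
   vertex a, and for each arrow e : src e -> tgt e a linear map, acting on
   row vectors by right multiplication v |-> v *m rmap e *)
Record rep := Rep {
  rdim : V -> nat;
  rmap : forall e : E, 'M[k]_(rdim (src e), rdim (tgt e)) }.

Definition homfam (M N : rep) := forall a : V, 'M[k]_(rdim M a, rdim N a).

Definition is_hom (M N : rep) (f : homfam M N) : Prop :=
  forall e : E, rmap M e *m f (tgt e) = f (src e) *m rmap N e.

(* composition "f then g" (written g o f in the paper) *)
Definition hcomp (M N L : rep) (f : homfam M N) (g : homfam N L) : homfam M L :=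
  fun a => f a *m g a.

Definition hid (M : rep) : homfam M M := fun a => 1%:M.

Definition heq (M N : rep) (f g : homfam M N) : Prop := forall a, f a = g a.

Definition hom_nonzero (M N : rep) (f : homfam M N) : Prop := exists a, f a != 0.

Definition is_mono (M N : rep) (f : homfam M N) : Prop := forall a, row_free (f a).
Definition is_epi (M N : rep) (f : homfam M N) : Prop := forall a, row_full (f a).

Definition projective (P : rep) : Prop :=
  forall (N N' : rep) (g : homfam N N'), is_hom g -> is_epi g ->
  forall h : homfam P N', is_hom h ->
  exists l : homfam P N, is_hom l /\ heq (hcomp l g) h.

(* (P, e) is the indecomposable projective P_a = e_a kQ: it represents the
   functor M |-> M e_a = M_a, with universal element e = e_a in P_a. *)
Definition is_Pa (a : V) (P : rep) (e : 'rV[k]_(rdim P a)) : Prop :=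
  forall (M : rep) (m : 'rV[k]_(rdim M a)),
    (exists phi : homfam P M, is_hom phi /\ e *m phi a = m) /\
    (forall phi psi : homfam P M, is_hom phi -> is_hom psi ->
       e *m phi a = m -> e *m psi a = m -> heq phi psi).

Definition rep_iso (M N : rep) : Prop :=
  exists (f : homfam M N) (g : homfam N M),
    [/\ is_hom f, is_hom g, heq (hcomp f g) (hid M) & heq (hcomp g f) (hid N)].

Definition indecomposable (M : rep) : Prop :=
  (0 < \sum_(a : V) rdim M a)%N /\
  forall phi : homfam M M, is_hom phi -> heq (hcomp phi phi) phi ->
    (forall a, phi a = 0) \/ heq phi (hid M).

Definition rep_finite : Prop :=
  exists (n : nat) (L : 'I_n -> rep),
    forall M : rep, indecomposable M -> exists i : 'I_n, rep_iso M (L i).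

Definition acyclic : Prop :=
  forall p : seq E, p != [::] -> ~~ cycle (fun e1 e2 => tgt e1 == src e2) p.

Definition is_sink (i : V) : Prop := forall e : E, src e != i.
Definition is_source (j : V) : Prop := forall e : E, tgt e != j.

End Quiver.

(* Main.v *)
Require Import Defs.
From mathcomp Require Import all_boot all_order all_algebra.
Set Implicit Arguments.
Unset Strict Implicit.
Unset Printing Implicit Defensive.
Import GRing.Theory.
Local Open Scope ring_scope.

Lemma ncyc (T : eqType) (r : rel T) (q : seq T) (e : T) :
  path r e q -> ~~ uniq (e :: q) -> exists c : seq T, c != [::] /\ cycle r c.
Proof.
elim: q e => [|x p IH] e; first by [].

move=> Hp; rewrite [uniq _]/= negb_and negbK => /orP [Hin|Hu].
- move: Hp; case/splitPr: Hin => p1 p2.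
  rewrite cat_path => /andP [H1 /= /andP [H2 _]].
  by exists (e :: p1); split => //; rewrite /= rcons_path H1.
- move: Hp => /= /andP [_ Hp]; exact: IH Hp Hu.
Qed.

Lemma walk (T : finType) (W : Type) (st en : T -> W) (r : rel T)
  (Hr : forall e1 e2, en e1 = st e2 -> r e1 e2)
  (Hc : forall c, c != [::] -> ~~ cycle r c)
  (Pr Done : W -> Prop)
  (Hstep : forall a, Pr a -> Done a \/ exists e, st e = a /\ Pr (en e))
  (a : W) : Pr a -> exists b, Pr b /\ Done b.
Proof.
have claim : forall n a, Pr a -> (exists b, Pr b /\ Done b) \/
   exists e p, [/\ st e = a, path r e p & size p = n].
  elim=> [|n IH] a0 Ha.
  - case: (Hstep a0 Ha) => [Hd|[e [He Hp]]]; first by left; exists a0.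
    by right; exists e, [::].
  - case: (Hstep a0 Ha) => [Hd|[e [He Hp]]]; first by left; exists a0.
    case: (IH _ Hp) => [H|[e' [p [He' Hpp Hs]]]]; first by left.
    right; exists e, (e' :: p); split => //=; last by rewrite Hs.
    by rewrite Hpp ?andbT; apply: Hr; rewrite He'.
move=> Ha; case: (claim #|T| a Ha) => // -[e [p [_ Hp Hs]]].
have Hu : ~~ uniq (e :: p).
  apply/negP => /card_uniqP Hcard.
  have := max_card (mem (e :: p)); rewrite Hcard /= Hs ltnn //.
have [c [Hc0 Hcy]] := ncyc Hp Hu.
by have := Hc c Hc0; rewrite Hcy.
Qed.

Lemma hcomp_hom (k : fieldType) (V E : finType) (src tgt : E -> V)
  (M N L : rep k src tgt) (f : homfam M N) (g : homfam N L) :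
  is_hom f -> is_hom g -> is_hom (hcomp f g).
Proof. by move=> Hf Hg e; rewrite /hcomp mulmxA Hf -!mulmxA Hg. Qed.

Lemma hid_hom (k : fieldType) (V E : finType) (src tgt : E -> V)
  (M : rep k src tgt) : is_hom (hid M).
Proof. by move=> e; rewrite /hid mulmx1 mul1mx. Qed.

Lemma proj_inj (k : fieldType) (V E : finType) (src tgt : E -> V)
  (Y : rep k src tgt) (HY : projective Y) (e0 : E)
  (y : 'rV_(rdim Y (src e0))) : y *m rmap Y e0 = 0 -> y = 0.
Proof.
pose s := src e0.
pose N : rep k src tgt := @Rep _ _ _ src tgt (fun x => rdim Y x + rdim Y s)%N
  (fun e => block_mx (rmap Y e) (if e == e0 then pid_mx (rdim Y s) else 0) 0 0).
pose g : homfam N Y := fun x => col_mx 1%:M 0.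
have Hg : is_hom g.
  by move=> e; rewrite /g /= mul_block_col mul_col_mx !mulmx1 !mulmx0 !mul0mx !addr0 mul1mx.
have Hepi : is_epi g.
  move=> x; rewrite /g -sub1mx; apply: submx_trans (addsmxSl _ 0) _.
  by rewrite addsmxE.
have [l [Hl Hlg]] := HY N Y g Hg Hepi (hid Y) (hid_hom Y).
have HL : forall x, lsubmx (l x) = 1%:M.
  move=> x; have := Hlg x; rewrite /hcomp /g /hid -[l x]hsubmxK mul_row_col.
  by rewrite mulmx1 mulmx0 addr0 row_mxKl.
have := Hl e0; rewrite -[l (tgt e0)]hsubmxK -[l (src e0)]hsubmxK.
rewrite mul_mx_row /= mul_row_block eqxx pid_mx_1 => /eq_row_mx [_].
rewrite HL !mulmx0 addr0 mul1mx => Hr Hy.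
by rewrite -[y]mulmx1 -Hr mulmxA Hy mul0mx.
Qed.

Lemma psi_inj (k : fieldType) (V E : finType) (src tgt : E -> V)
  (P : V -> rep k src tgt) (eP : forall a : V, 'rV[k]_(rdim (P a) a))
  (HP : forall a : V, is_Pa (eP a)) (e : E) :
  exists psi : homfam (P (tgt e)) (P (src e)), is_hom psi /\
    forall b (u : 'rV_(rdim (P (tgt e)) b)), u *m psi b = 0 -> u = 0.
Proof.
pose a := tgt e; pose c := src e; pose M := P a.
have [[psi [Hpsi Epsi]] _] := HP a (P c) (eP c *m rmap (P c) e).
exists psi; split => // b u Hu.
pose M' : rep k src tgt := @Rep _ _ _ src tgt (fun x => rdim M x + rdim M a)%N
  (fun e2 => block_mx (rmap M e2) 0 (if e2 == e then pid_mx (rdim M a) else 0) 0).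
pose iota : homfam M M' := fun x => row_mx 1%:M 0.
have Hiota : is_hom iota.
  move=> e2; rewrite /iota /= mul_mx_row mul_row_block.
  by rewrite !mulmx0 !mul0mx !mul1mx !mulmx1 !addr0.
pose m' : 'rV_(rdim M' c) := row_mx 0 (eP a).
have [[phi [Hphi Ephi]] _] := HP c M' m'.
have Hk : heq (hcomp psi phi) iota.
  apply: ((HP a M' (row_mx (eP a) 0)).2) => //.
  - exact: hcomp_hom.
  - rewrite /hcomp mulmxA Epsi -mulmxA Hphi mulmxA Ephi /m' /= mul_row_block eqxx.
    by rewrite pid_mx_1 !mulmx0 !mul0mx !mulmx1 !add0r.
  - by rewrite /iota mul_mx_row mulmx1 mulmx0.
have := Hk b; rewrite /hcomp => Hb.
have : u *m iota b = 0 by rewrite -Hb mulmxA Hu mul0mx.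
rewrite /iota mul_mx_row mulmx1 mulmx0 => /eqP.
by rewrite row_mx_eq0 => /andP [/eqP -> _].
Qed.

Lemma sink_dim (k : fieldType) (V E : finType) (src tgt : E -> V)
  (P : V -> rep k src tgt) (eP : forall a : V, 'rV[k]_(rdim (P a) a))
  (HP : forall a : V, is_Pa (eP a)) (i : V) (Hi : is_sink src i) (b : V) :
  (rdim (P i) b <= (b == i))%N.
Proof.
pose S : rep k src tgt := @Rep _ _ _ src tgt (fun x => nat_of_bool (x == i)) (fun e => 0).
pose get x (c : 'I_(rdim (P i) x)) := \sum_(t < rdim (P i) i | val t == val c) eP i 0 t.
pose sig : homfam S (P i) := fun x => \matrix_(r, c) (if x == i then get x c else 0).
have Hsig : is_hom sig.
  move=> e; rewrite /= mul0mx; apply/esym.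
  have -> : sig (src e) = 0.
    apply/matrixP => r c; have := ltn_ord r; move: (nat_of_ord r) => n H.
    by rewrite /= (negbTE (Hi e)) in H.
  by rewrite mul0mx.
have Esig : const_mx 1 *m sig i = eP i.
  apply/rowP => c; rewrite !mxE.
  under eq_bigr => r _ do rewrite !mxE eqxx mul1r.
  rewrite sumr_const card_ord /= /get.
  rewrite (eq_bigl (fun t => t == c)); last by move=> t; rewrite val_eqE.
  by rewrite big_pred1_eq eqxx mulr1n.
have [[phi [Hphi Ephi]] _] := HP i S (const_mx 1).
have Hid : heq (hcomp phi sig) (hid (P i)).
  apply: ((HP i (P i) (eP i)).2) => //.
  - exact: hcomp_hom.
  - exact: hid_hom.
  - by rewrite /hcomp mulmxA Ephi Esig.
  - by rewrite /hid mulmx1.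
have := Hid b; rewrite /hcomp /hid => H1.
have := mxrank1 k (rdim (P i) b); rewrite -H1 => H2.
rewrite -{1}H2; apply: leq_trans (mxrankM_maxl _ _) _.
exact: rank_leq_col.
Qed.

Lemma sink_mono (k : fieldType) (V E : finType) (src tgt : E -> V)
  (P : V -> rep k src tgt) (eP : forall a : V, 'rV[k]_(rdim (P a) a))
  (HP : forall a : V, is_Pa (eP a)) (i : V) (Hi : is_sink src i)
  (M : rep k src tgt) (th : homfam (P i) M) :
  eP i *m th i != 0 -> is_mono th /\ hom_nonzero th.
Proof.
move=> Hn; split; last first.
  by exists i; apply: contra Hn => /eqP ->; rewrite mulmx0.
move=> b; rewrite /row_free.
have Hd := sink_dim HP Hi b.
case: (eqVneq b i) Hd => [->|Hb] Hd.
- have Hr : \rank (th i) != 0%N.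
    by rewrite mxrank_eq0; apply: contra Hn => /eqP ->; rewrite mulmx0.
  have := rank_leq_row (th i); move: Hr Hd.
  case: (\rank (th i)) => // n _; case: (rdim (P i) i) => // [[|m]] //= _.
  by case: n.
- move: Hd; rewrite ?(negbTE Hb) leqn0 => /eqP Hd.
  have := rank_leq_row (th b); move: (\rank (th b)) => n.
  by rewrite Hd leqn0.
Qed.

Lemma free_cover (k : fieldType) (V E : finType) (src tgt : E -> V)
  (P : V -> rep k src tgt) (eP : forall a : V, 'rV[k]_(rdim (P a) a))
  (HP : forall a : V, is_Pa (eP a))
  (Y : rep k src tgt) (HY : projective Y) (i : V) (w : 'rV_(rdim Y i)) :
  w != 0 -> exists a (pi : homfam Y (P a)), is_hom pi /\ w *m pi i != 0.
Proof.
move=> Hw.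
pose T := {c : V & 'rV[k]_(rdim Y c)}.
have claim : forall L : seq T, exists (F : rep k src tgt) (g : homfam F Y),
  [/\ is_hom g, all (fun x => (tagged x <= g (tag x))%MS) L &
      forall c (v : 'rV_(rdim F c)), v != 0 ->
        exists a (pi : homfam F (P a)), is_hom pi /\ v *m pi c != 0].
  elim=> [|[a m] L [F [g [Hg Hall Hv]]]].
  - exists (@Rep _ _ _ src tgt (fun _ => 0%N) (fun e => 0)), (fun c => 0).
    split => //; first by move=> e; rewrite mulmx0 mul0mx.
    by move=> c v; rewrite thinmx0 eqxx.
  - have [[phi [Hphi Ephi]] _] := HP a Y m.
    pose F' : rep k src tgt := @Rep _ _ _ src tgt
      (fun c => rdim (P a) c + rdim F c)%N
      (fun e => block_mx (rmap (P a) e) 0 0 (rmap F e)).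
    exists F', (fun c => col_mx (phi c) (g c)); split.
    + move=> e; rewrite /= mul_block_col mul_col_mx !mul0mx addr0 add0r.
      by rewrite Hphi Hg.
    + rewrite /= -addsmxE; apply/andP; split.
        by rewrite -Ephi; apply: submx_trans (submxMl _ _) (addsmxSl _ _).
      apply: sub_all Hall => -[c y] /= H.
      by rewrite -addsmxE; apply: submx_trans H (addsmxSr _ _).
    + move=> c v Hv0.
      have : (lsubmx v != 0) || (rsubmx v != 0).
        by move: Hv0; rewrite -{1}[v]hsubmxK row_mx_eq0 negb_and.
      case/orP => [Hl|Hr].
      * exists a, (fun x => col_mx 1%:M 0); split.
          move=> e; rewrite /= mul_block_col mul_col_mx !mulmx1 !mulmx0 !mul0mx.
          by rewrite !addr0 mul1mx.
        by rewrite -[v]hsubmxK mul_row_col mulmx1 mulmx0 addr0.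
      * have [b [pi [Hpi Hpv]]] := Hv c _ Hr.
        exists b, (@hcomp _ _ _ _ _ F' F _ (fun x => col_mx (0 : 'M_(rdim (P a) x, rdim F x)) 1%:M) pi); split.
          apply: hcomp_hom => // e; rewrite /= mul_block_col mul_col_mx.
          by rewrite !mulmx1 !mulmx0 !mul0mx !add0r mul1mx.
        by rewrite /hcomp mulmxA -[v]hsubmxK mul_row_col mulmx1 mulmx0 add0r.
pose L := [seq (Tagged (fun c => 'rV[k]_(rdim Y c)) (delta_mx 0 t))
                        | c <- enum V, t <- enum 'I_(rdim Y c)].
have [F [g [Hg Hall Hv]]] := claim L.
have Hepi : is_epi g.
  move=> c; rewrite -sub1mx; apply/row_subP => t; rewrite row1.
  by move/all_allpairsP: Hall => /(_ c t (mem_enum _ c) (mem_enum _ t)).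
have [l [Hl Hlg]] := HY F Y g Hg Hepi (hid Y) (hid_hom Y).
have Hwl : w *m l i != 0.
  apply: contra Hw => /eqP H; apply/eqP.
  by have := Hlg i; rewrite /hcomp /hid => H1; rewrite -[w]mulmx1 -H1 mulmxA H mul0mx.
have [a [pi [Hpi Hpv]]] := Hv i _ Hwl.
exists a, (hcomp l pi); split; first exact: hcomp_hom.
by rewrite /hcomp mulmxA.
Qed.
Unset Implicit Arguments.
Theorem lemma5p6 (k : closedFieldType) (V E : finType) (src tgt : E -> V)
  (Hacyc : acyclic src tgt) (Hfin : rep_finite k src tgt)
  (P : V -> rep k src tgt) (eP : forall a : V, 'rV[k]_(rdim (P a) a))
  (HP : forall a : V, is_Pa (eP a))
  (X Y : rep k src tgt) (HX : projective X) (HY : projective Y)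
  (f : homfam X Y) (Hf : is_hom f) (Hf0 : hom_nonzero f) :
  exists (i j : V), is_sink src i /\ is_source tgt j /\
    exists (alpha : homfam (P i) X) (beta : homfam Y (P j)),
      [/\ is_hom alpha, is_hom beta,
          is_mono (hcomp (hcomp alpha f) beta)
        & hom_nonzero (hcomp (hcomp alpha f) beta)].
Proof.
have [a0 Ha0] := Hf0.
have [x0 Hx0] : exists x : 'rV_(rdim X a0), x *m f a0 != 0.
  case: (pickP (fun r => row r (f a0) != 0)) => [r Hr|Hn].
    by exists (delta_mx 0 r); rewrite -rowE.
  case/negP: Ha0; apply/eqP/row_matrixP => r; rewrite row0.
  by apply/eqP; have := Hn r; move/negbFE.
have step1 : forall a, (exists x : 'rV_(rdim X a), x *m f a != 0) ->
    is_sink src a \/ exists e, src e = a /\ exists x : 'rV_(rdim X (tgt e)), x *m f (tgt e) != 0.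
  move=> a [x Hx].
  case: (boolP [exists e, src e == a]) => [/existsP [e /eqP He] | Hn].
  - right; exists e; split => //; subst a.
    exists (x *m rmap X e); rewrite -mulmxA Hf mulmxA.
    apply: contra Hx => /eqP H; apply/eqP; exact: proj_inj HY e _ H.
  - left => e; apply/negP => He; case/negP: Hn; apply/existsP.
    by exists e.
have [i [[x Hx] Hi]] :=
  @walk E V src tgt (fun e1 e2 => tgt e1 == src e2)
    (fun e1 e2 H => introT eqP H) Hacyc
    (fun a => exists x : 'rV_(rdim X a), x *m f a != 0) (is_sink src)
    step1 a0 (ex_intro _ x0 Hx0).
pose w := x *m f i.
have [[alpha [Halpha Ealpha]] _] := HP i X x.
have [a [pi [Hpi Hpiw]]] := free_cover HP HY Hx.
have Hc : forall c, c != [::] -> ~~ cycle (fun e1 e2 => src e1 == tgt e2) c.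
  move=> c Hc0; have := Hacyc (rev c); rewrite rev_cycle.
  rewrite (@eq_cycle _ _ (fun e1 e2 => src e1 == tgt e2)); last by move=> e1 e2; rewrite eq_sym.
  by apply; move: Hc0; case: c => // z s; rewrite rev_cons; case: (rev s).
have step2 : forall b, (exists rho : homfam (P a) (P b), is_hom rho /\ (w *m pi i) *m rho i != 0) ->
    is_source tgt b \/ exists e, tgt e = b /\
      exists rho : homfam (P a) (P (src e)), is_hom rho /\ (w *m pi i) *m rho i != 0.
  move=> b [rho [Hrho Hr]].
  case: (boolP [exists e, tgt e == b]) => [/existsP [e /eqP He] | Hn].
  - right; exists e; split => //; subst b.
    have [psi [Hpsi Ipsi]] := psi_inj HP e.
    exists (hcomp rho psi); split; first exact: hcomp_hom.
    rewrite /hcomp mulmxA; apply: contra Hr => /eqP H; apply/eqP; exact: Ipsi H.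
  - left => e; apply/negP => He; case/negP: Hn; apply/existsP.
    by exists e.
have start2 : exists rho : homfam (P a) (P a), is_hom rho /\ (w *m pi i) *m rho i != 0.
  exists (hid (P a)); split; first exact: hid_hom.
  by rewrite /hid mulmx1.
have [j [[rho [Hrho Erho]] Hj]] :=
  @walk E V tgt src (fun e1 e2 => src e1 == tgt e2)
    (fun e1 e2 H => introT eqP H) Hc _ (is_source tgt) step2 a start2.
exists i, j; split => //; split => //.
exists alpha, (hcomp pi rho).
have Hb : is_hom (hcomp pi rho) by exact: hcomp_hom.
have Hne : eP i *m hcomp (hcomp alpha f) (hcomp pi rho) i != 0.
  by rewrite /hcomp !mulmxA Ealpha.
have [Hm Hz] := sink_mono HP Hi Hne.
by split.
Qed.
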